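(* Fix an integer $q\ge 2$. There is a constant $C>0$ depending only on $q$ such that for every $\varepsilon\in(0,1/C)$ there exists $n_0$ with the following property. Let $n\ge n_0$, let $t$ be a positive integer with $t\le 10\sqrt{n}$, and let $S\subseteq[q]^n$ satisfy $\Delta(G[S])\le n^5$. Let \[ S_1 = \left\{ v\in S : \deg_k(v) \le \varepsilon n^{\lceil k/2\rceil/2} \text{ for each }k=1,\dots,20\right\}. \] Then $|S_1|\le (1 + C\varepsilon)H_q(n,t)$.
   Context: $d$ is the Hamming distance on $[q]^n$. $V_q(n,r) = \sum_{i=0}^{r}\binom{n}{i}(q-1)^i$ and $H_q(n,t) = q^n / V_q(n,t)$. $G = G_{q,n,t}$ is the graph with vertex set $[q]^n$ in which two distinct vertices are adjacent iff their Hamming distance is at most $2t$; $G[S]$ is its induced subgraph on $S$ and $\Delta(\cdot)$ is the maximum degree. For $v\in S$ and $k\ge1$, $\deg_k(v)=|\{u\in S : d(u,v)=k\}|$. *)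

(* Defs.v *)
From HB Require Import structures.
From mathcomp Require Import all_boot all_order all_algebra.
From mathcomp Require Import reals.
Set Implicit Arguments. Unset Strict Implicit. Unset Printing Implicit Defensive.
Import Order.TTheory GRing.Theory Num.Theory.

Definition word (q n : nat) := {ffun 'I_n -> 'I_q}.

Definition hamming (q n : nat) (x y : word q n) : nat :=
  #|[set i : 'I_n | x i != y i]|.

Definition Vq (q n r : nat) : nat := \sum_(i < r.+1) 'C(n, i) * (q - 1) ^ i.

Definition Hq (R : realType) (q n t : nat) : R :=
  ((q ^ n)%:R / (Vq q n t)%:R)%R.

Definition adjG (q n t : nat) (x y : word q n) : bool :=
  (x != y) && (hamming x y <= 2 * t).

Definition degG (q n t : nat) (S : {set word q n}) (v : word q n) : nat :=
  #|[set u in S | adjG t v u]|.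

(* maximum degree Delta(G[S]) (0 for empty S) *)
Definition maxdegG (q n t : nat) (S : {set word q n}) : nat :=
  \max_(v in S) degG t S v.

Definition degk (q n : nat) (S : {set word q n}) (k : nat) (v : word q n) : nat :=
  #|[set u in S | hamming u v == k]|.

Definition ceil_half (k : nat) : nat := (k.+1)./2.

(* S_1 = { v in S : deg_k(v) <= eps * n^{ceil(k/2)/2} for k = 1..20 } ;
   n^{m/2} is written (sqrt n)^m *)
Definition S1 (R : realType) (q n : nat) (eps : R) (S : {set word q n})
  : {set word q n} :=
  [set v in S | [forall k : 'I_21, (0 < (k : nat))%N ==>
     ((degk S k v)%:R <= eps * (Num.sqrt (n%:R : R)) ^+ ceil_half k)%R]].

(* Main.v *)
Require Import Defs.
From HB Require Import structures.
From mathcomp Require Import all_boot all_order all_algebra.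
From mathcomp Require Import reals.
From mathcomp Require Import zify ring lra.
Import Order.TTheory GRing.Theory Num.Theory.
Set Implicit Arguments. Unset Strict Implicit. Unset Printing Implicit Defensive.

Section Comb.
Variables (q n : nat).
Local Notation W := (word q n).

Definition dset (x y : W) : {set 'I_n} := [set i | x i != y i].

Lemma hammingC (x y : W) : hamming x y = hamming y x.
Proof. by rewrite /hamming; apply: eq_card => i; rewrite !inE eq_sym. Qed.

Lemma card_dset_eq (u : W) (E : {set 'I_n}) :
  #|[set x : W | dset x u == E]| = (q - 1) ^ #|E|.
Proof.
pose F := fun i => if i \in E then predC1 (u i) else pred1 (u i).
have -> : [set x : W | dset x u == E] = [set x : W | x \in family F].
  apply/setP => x; rewrite !inE; apply/eqP/familyP => [HE i|H].
    rewrite /F -HE !inE; case: (x i =P u i) => [->|ne] /=; rewrite !inE ?eqxx //=; exact/eqP.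
  apply/setP => i; rewrite inE; have := H i; rewrite /F.
  by case: (i \in E); rewrite !inE; [move=> -> | move=> /eqP ->; rewrite eqxx].
rewrite cardsE card_family foldrE big_map big_enum /=.
rewrite (eq_bigr (fun i => if i \in E then q - 1 else 1)); last first.
  by move=> i _; rewrite /F; case: (i \in E); rewrite ?cardC1 ?card_ord ?subn1 ?card1.
rewrite -big_mkcond prod_nat_const.
congr (_ ^ _); apply: eq_card => i; by [].
Qed.

Lemma card_ham_eq (u : W) i :
  #|[set x : W | hamming x u == i]| = 'C(n, i) * (q - 1) ^ i.
Proof.
rewrite -sum1_card.
rewrite (partition_big (fun x => dset x u) (fun E : {set 'I_n} => #|E| == i)); last first.
  by move=> x; rewrite inE.
rewrite (eq_bigr (fun _ => (q - 1) ^ i)); last first.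
  move=> E /eqP hE; rewrite -hE -(card_dset_eq u E) -[RHS]sum1_card.
  apply: eq_bigl => x; rewrite !inE.
  case: (dset x u =P E) => [Hd|Hd]; rewrite ?andbF ?andbT //.
  by rewrite /hamming -/(dset x u) Hd eqxx.
rewrite big_const iter_addn_0 mulnC; congr (_ * _).
by rewrite -[n in 'C(n, _)](card_ord n) -card_draws; apply: eq_card => E; rewrite inE.
Qed.

Lemma card_ball (u : W) r : #|[set x : W | hamming x u <= r]| = Vq q n r.
Proof.
elim: r => [|r IH].
  rewrite /Vq big_ord1 -(card_ham_eq u 0).
  by apply: eq_card => x; rewrite !inE leqn0.
rewrite /Vq big_ord_recr /= -/(Vq q n r) -IH -(card_ham_eq u r.+1).
rewrite -(cardsID [set x : W | hamming x u <= r] [set x : W | hamming x u <= r.+1]).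
congr (_ + _).
  apply: eq_card => x; rewrite !inE.
  by apply/andP/idP => [[]//|H]; split => //; exact: leqW.
by apply: eq_card => x; rewrite !inE -ltnNge eqn_leq andbC.
Qed.


Definition Tq i := 'C(n, i) * (q - 1) ^ i.

Lemma Tq_step t i : (1 <= q - 1)%N -> (i < t)%N -> (Tq i * (n - t) <= Tq i.+1 * t)%N.
Proof.
move=> hq it; have H := mul_bin_left n i.
rewrite /Tq expnS.
set c0 := 'C(n, i) in H *; set c1 := 'C(n, i.+1) in H *.
set p := (q - 1) ^ i; set Q := q - 1 in hq *.
have hnt : (n - t <= n - i)%N by lia.
apply: (@leq_trans (c0 * p * ((n - i) * Q))).
  rewrite leq_mul2l; apply/orP; right; nia.
apply: (@leq_trans (c1 * (Q * p) * i.+1)); last by rewrite leq_mul2l it orbT.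
have -> : (c0 * p * ((n - i) * Q) = ((n - i) * c0) * p * Q)%N by ring.
rewrite -H; have -> : (c1 * (Q * p) * i.+1 = (i.+1 * c1) * p * Q)%N by ring.
by [].
Qed.

Lemma Tq_iter t h i : (1 <= q - 1)%N -> (i + h <= t)%N ->
  (Tq i * (n - t) ^ h <= Tq (i + h) * t ^ h)%N.
Proof.
move=> hq; elim: h => [|h IH] H; first by rewrite addn0.
rewrite expnS mulnCA.
apply: (@leq_trans ((n - t) * (Tq (i + h) * t ^ h))).
  by rewrite leq_mul2l IH ?orbT //; lia.
rewrite addnS expnS.
have Hs : (Tq (i + h) * (n - t) <= Tq (i + h).+1 * t)%N by apply: Tq_step => //; lia.
move: Hs; set A := Tq (i + h); set C := Tq (i + h).+1; set B := t ^ h; nia.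
Qed.

Lemma Vq_ratio t h : (1 <= q - 1)%N -> (h <= t)%N ->
  ((n - t) ^ h * Vq q n (t - h) <= t ^ h * Vq q n t)%N.
Proof.
move=> hq ht; rewrite /Vq big_distrr /=.
apply: (@leq_trans (\sum_(i < (t - h).+1) Tq (i + h) * t ^ h)).
  apply: leq_sum => i _; rewrite mulnC; apply: Tq_iter => //.
  have := ltn_ord i; lia.
rewrite -big_distrl /= mulnC leq_mul2l; apply/orP; right.
have -> : (\sum_(i < (t - h).+1) Tq (i + h) = \sum_(h <= i < t.+1) Tq i)%N.
  by rewrite -(big_mkord xpredT (fun i => Tq (i + h))) -[in RHS](add0n h) big_addn subSn.
rewrite (_ : \sum_(i < t.+1) _ = \sum_(0 <= i < t.+1) Tq i)%N; last by rewrite big_mkord.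
rewrite [X in (_ <= X)%N](@big_cat_nat _ _ _ h) //=; last by lia.
exact: leq_addl.
Qed.

Lemma key_bound (u v x : W) t : (hamming x u <= t)%N -> (hamming x v <= t)%N ->
  (2 * #|dset x u :\: dset u v| + hamming u v <= 2 * t)%N.
Proof.
move=> h1 h2.
have e1 := cardsID (dset u v) (dset x u).
have e2 := cardsID (dset u v) (dset x v).
have e3 : dset x u :\: dset u v = dset x v :\: dset u v.
  apply/setP => i; rewrite !inE.
  by case: (eqVneq (u i) (v i)) => [->|].
have e4 : (#|dset u v| <= #|dset x u :&: dset u v| + #|dset x v :&: dset u v|)%N.
  rewrite -cardsUI; apply: leq_trans (leq_addr _ _).
  apply: subset_leq_card; apply/subsetP => i; rewrite !inE => Hi.
  rewrite Hi !andbT; case: (eqVneq (x i) (u i)) => [e|] //=.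
  by rewrite e.
have -> : hamming u v = #|dset u v| by [].
move: h1 h2; rewrite -[hamming x u]/(#|dset x u|) -[hamming x v]/(#|dset x v|).
rewrite e3 in e1 *; lia.
Qed.


Lemma inter_bound (u v : W) t :
  (#|[set x : W | (hamming x u <= t) && (hamming x v <= t)]| <=
   q ^ hamming u v * Vq q n (t - ceil_half (hamming u v)))%N.
Proof.
pose D := dset u v.
pose g (x : W) : W := [ffun i => if i \in D then u i else x i].
pose hh (x : W) : W := [ffun i => if i \in D then x i else u i].
pose f (x : W) := (g x, hh x).
have injf : injective f.
  move=> x y [Hg Hh]; apply/ffunP => i.
  move: (congr1 (fun f : W => f i) Hg) (congr1 (fun f : W => f i) Hh).
  by rewrite !ffunE; case: (i \in D).
set I := [set x : W | _].
rewrite -(card_imset I injf).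
pose F := [set y : W | y \in family (fun i => if i \in D then predT else pred1 (u i))].
pose B := [set y : W | hamming y u <= t - ceil_half (hamming u v)].
have sub : f @: I \subset setX B F.
  apply/subsetP => _ /imsetP [x Hx ->]; rewrite in_setX /=; apply/andP; split.
    rewrite inE.
    have -> : hamming (g x) u = #|dset x u :\: D|.
      apply: eq_card => i; rewrite !inE ffunE [i \in D]inE.
      by case: (u i != v i); rewrite ?eqxx.
    move: Hx; rewrite inE => /andP [h1 h2]; have := key_bound h1 h2.
    rewrite /ceil_half; have := odd_double_half (hamming u v).+1.
    rewrite -/D; case: (odd _) => /=; lia.
  rewrite inE; apply/familyP => i; rewrite ffunE.
  by case: (i \in D); rewrite //= inE.
apply: leq_trans (subset_leq_card sub) _.
rewrite cardsX card_ball mulnC leq_mul2r; apply/orP; right.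
rewrite cardsE card_family foldrE big_map big_enum /=.
rewrite (eq_bigr (fun i => if i \in D then q else 1)); last first.
  by move=> i _; case: (i \in D); rewrite ?card1 // card_ord.
by rewrite -big_mkcond prod_nat_const.
Qed.

Lemma inter_empty (u v : W) t : (2 * t < hamming u v)%N ->
  #|[set x : W | (hamming x u <= t) && (hamming x v <= t)]| = 0%N.
Proof.
move=> H; apply/eqP; rewrite cards_eq0; apply/eqP/setP => x; rewrite !inE.
apply/negbTE/negP => /andP [h1 h2]; have := key_bound h1 h2; lia.
Qed.

Lemma hamming_eq0 (u v : W) : (hamming u v == 0)%N = (u == v).
Proof.
rewrite /hamming cards_eq0; apply/eqP/eqP => [H|->].
  apply/ffunP => i; apply/eqP; apply: contraT => ne.
  have : i \in [set i | u i != v i] by rewrite inE.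
  by rewrite H inE.
by apply/setP => i; rewrite !inE eqxx.
Qed.


Lemma point_count (A : {set W}) (B : W -> {set W}) (x : W) :
  (\sum_(u in A) (x \in B u) <= 1 + \sum_(u in A) \sum_(v in A | v != u) (x \in B u :&: B v))%N.
Proof.
case: (pickP [pred u | (u \in A) && (x \in B u)]) => [u0 /andP [Hu0 Hx0] | none].
  rewrite (bigD1 u0 Hu0) [X in (_ <= _ + X)%N](bigD1 u0 Hu0) /= Hx0 leq_add2l.
  apply: leq_trans (leq_addr _ _); apply: leq_sum => v _; by rewrite inE Hx0.
by rewrite big1 // => u Hu; move: (none u); rewrite /= Hu /= => ->.
Qed.

Lemma double_count (A : {set W}) (B : W -> {set W}) :
  (\sum_(u in A) #|B u| <= #|W| + \sum_(u in A) \sum_(v in A | v != u) #|B u :&: B v|)%N.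
Proof.
have cE : forall (C : {set W}), #|C| = (\sum_x (x \in C))%N.
  by move=> C; rewrite -sum1_card big_mkcond.
have -> : #|W| = (\sum_(x : W) 1)%N by rewrite sum1_card.
rewrite (eq_bigr (fun u => \sum_x (x \in B u))%N); last by move=> u _; rewrite cE.
rewrite [X in (_ <= _ + X)%N](eq_bigr (fun u => \sum_x \sum_(v in A | v != u) (x \in B u :&: B v))%N); last first.
  move=> u _; rewrite exchange_big /=; apply: eq_bigr => v _; by rewrite cE.
rewrite [X in (_ <= _ + X)%N]exchange_big /= -big_split /= exchange_big /=.
by apply: leq_sum => x _; apply: point_count.
Qed.

End Comb.

Lemma ceil_half_spec d : (d <= 2 * ceil_half d)%N /\ (2 * ceil_half d <= d.+1)%N.
Proof. rewrite /ceil_half; have := odd_double_half d.+1; case: (odd _) => /=; lia. Qed.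

Lemma ch_le10 k : (k <= 20)%N -> (ceil_half k <= 10)%N.
Proof. have := ceil_half_spec k; lia. Qed.
Lemma ch_ge11 d : (20 < d)%N -> (11 <= ceil_half d)%N.
Proof. have := ceil_half_spec d; lia. Qed.

Local Open Scope ring_scope.

Lemma pair_bound (R : realType) (q n t : nat) (s b : R) :
  (2 <= q)%N -> s ^+ 2 = n%:R -> 0 < s -> b = (20 * q ^ 2)%:R ->
  t%:R <= 10 * s -> (2 * t <= n)%N -> (0 < n)%N ->
  forall u v : word q n,
  (#|[set x : word q n | (hamming x u <= t)%N && (hamming x v <= t)%N]|)%:R
    <= (b / s) ^+ ceil_half (hamming u v) * (Vq q n t)%:R.
Proof.
move=> hq hs hs0 hb htn h2t hn u v.
set d := hamming u v.
have a0 : 0 <= b / s by rewrite divr_ge0 ?(ltW hs0) // hb ler0n.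
case: (ltnP (2 * t) d) => hd.
  by rewrite inter_empty // mulr_ge0 ?exprn_ge0 ?ler0n.
set h := ceil_half d.
have hod := odd_double_half d.+1.
have hh : (h <= t)%N by rewrite /h /ceil_half; move: hod; case: (odd _) => /=; lia.
have hd2 : (d <= 2 * h)%N by rewrite /h /ceil_half; move: hod; case: (odd _) => /=; lia.
set cnt := #|_|.
have c1 : (cnt <= q ^ d * Vq q n (t - h))%N by apply: inter_bound.
have c2 := @Vq_ratio q n t h ltac:(lia) hh.
have c3 : (cnt * (n - t) ^ h <= q ^ d * (t ^ h * Vq q n t))%N.
  apply: leq_trans (_ : q ^ d * Vq q n (t - h) * (n - t) ^ h <= _)%N.
    by rewrite leq_mul2r c1 orbT.
  by rewrite -mulnA leq_mul2l (mulnC (Vq _ _ _)) c2 orbT.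
have c4 : (q ^ d <= (q ^ 2) ^ h)%N by rewrite -expnM leq_pexp2l //; lia.
have c3R : cnt%:R * (n - t)%:R ^+ h <= (q ^ d)%:R * (t%:R ^+ h * (Vq q n t)%:R) :> R.
  by rewrite -!natrX -!natrM ler_nat.
have c4R : (q ^ d)%:R <= (q%:R ^+ 2) ^+ h :> R by rewrite -!natrX ler_nat.
have hnt : (n - t)%:R = n%:R - t%:R :> R by rewrite natrB //; lia.
have hnt0 : 0 < (n - t)%:R :> R by rewrite ltr0n; lia.
have h2tR : 2 * t%:R <= n%:R :> R by rewrite -(ler_nat R) natrM in h2t.
have key : t%:R * s <= 20 * (n - t)%:R :> R.
  rewrite hnt -hs; have ht0 : 0 <= t%:R :> R by [].
  nra.
have V0 : 0 <= (Vq q n t)%:R :> R by [].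
have P0 : 0 < ((n - t)%:R * s) ^+ h :> R by rewrite exprn_gt0 // mulr_gt0.
rewrite -(ler_pM2r P0).
apply: (@le_trans _ _ ((q ^ d)%:R * (t%:R ^+ h * (Vq q n t)%:R) * s ^+ h)).
  rewrite exprMn (mulrA cnt%:R).
  rewrite ler_pM2r ?exprn_gt0 //.
have e1 : (t%:R * s) ^+ h <= (20 * (n - t)%:R) ^+ h :> R.
  apply: lerXn2r => //; rewrite nnegrE ?mulr_ge0 ?(ltW hs0) ?(ltW hnt0) //.
apply: (@le_trans _ _ ((q%:R ^+ 2) ^+ h * ((20 * (n - t)%:R) ^+ h * (Vq q n t)%:R))).
  rewrite (_ : _ * _ * _ = (q ^ d)%:R * ((t%:R * s) ^+ h * (Vq q n t)%:R)); last first.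
    by rewrite exprMn; ring.
  apply: ler_pM => //.
    by apply: mulr_ge0 => //; apply: exprn_ge0; apply: mulr_ge0 => //; exact: ltW.
  by rewrite ler_wpM2r.
rewrite le_eqVlt; apply/orP; left; apply/eqP.
rewrite expr_div_n hb natrM natrX !exprMn.
field; by rewrite expf_neq0 // gt_eqF.
Qed.

Definition ball (q n t : nat) (u : word q n) : {set word q n} :=
  [set x : word q n | (hamming x u <= t)%N].

Lemma u_bound (R : realType) (q n t : nat) (s b eps : R) (S : {set word q n}) :
  (2 <= q)%N -> s ^+ 2 = n%:R -> 0 < s -> b = (20 * q ^ 2)%:R ->
  t%:R <= 10 * s -> (2 * t <= n)%N -> (0 < n)%N -> 0 < eps ->
  (maxdegG t S <= n ^ 5)%N -> b / s <= 1 ->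
  forall u, u \in S1 eps S ->
  \sum_(v in S1 eps S | v != u) (#|ball t u :&: ball t v|)%:R
    <= (21%:R * b ^+ 10 * eps + n%:R ^+ 5 * (b / s) ^+ 11) * (Vq q n t)%:R.
Proof.
move=> hq hs hs0 hb htn h2t hn heps hmax a1 u uS1.
set a := b / s; set V := (Vq q n t)%:R.
have a0 : 0 <= a by rewrite divr_ge0 ?(ltW hs0) // hb ler0n.
have V0 : 0 <= V by [].
have b1 : 1 <= b by rewrite hb ler1n; lia.
have setE : forall v, ball t u :&: ball t v =
   [set x : word q n | (hamming x u <= t)%N && (hamming x v <= t)%N].
  by move=> v; apply/setP => x; rewrite !inE.
have pb : forall v, (#|ball t u :&: ball t v|)%:R <= a ^+ ceil_half (hamming u v) * V.
  by move=> v; rewrite setE; apply: pair_bound.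
have F0 : forall v, 0 <= (#|ball t u :&: ball t v|)%:R :> R by [].
have sub : forall v, v \in S1 eps S -> v \in S by move=> v; rewrite inE => /andP [].
move: (uS1); rewrite inE => /andP [uS /forallP uk].
apply: le_trans (_ : \sum_(v in S | v != u) (#|ball t u :&: ball t v|)%:R <= _).
  rewrite [X in X <= _]big_mkcond [X in _ <= X]big_mkcond; apply: ler_sum => v _.
  case: ifP => [/andP [/sub -> ->] //| _]; case: ifP => _ //.
rewrite (bigID (fun v => hamming u v <= 20)%N) /= mulrDl.
apply: lerD.
  apply: le_trans (_ : \sum_(v | (v \in S) && (v != u) && (hamming u v <= 20)%N)
                          a ^+ ceil_half (hamming u v) * V <= _).
    by apply: ler_sum => v _; apply: pb.
  rewrite (partition_big (fun v => inord (hamming u v) : 'I_21) (fun k : 'I_21 => 0 < k)%N); last first.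
    move=> v /andP [/andP [_ vu] d20]; rewrite inordK ?ltnS // lt0n hamming_eq0 eq_sym.
    exact: vu.
  apply: le_trans (_ : \sum_(k : 'I_21 | (0 < k)%N) b ^+ 10 * eps * V <= _); last first.
    rewrite big_mkcond /=.
    apply: le_trans (_ : \sum_(k : 'I_21) b ^+ 10 * eps * V <= _).
      apply: ler_sum => k _; case: ifP => _ //.
      apply: mulr_ge0 => //; apply: mulr_ge0; [apply: exprn_ge0; exact: le_trans ler01 b1 | exact: ltW].
    by rewrite sumr_const card_ord -(mulr_natl (b ^+ 10 * eps * V) 21) !mulrA.
  apply: ler_sum => k k0.
  have kle : (k <= 20)%N by have := ltn_ord k.
  rewrite (eq_bigr (fun _ => a ^+ ceil_half k * V)); last first.
    move=> v /andP [/andP [_ d20] /eqP <-]; rewrite inordK //.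
  rewrite (eq_bigl (fun v => v \in [set w in S | hamming w u == k])); last first.
    move=> v; rewrite !inE hammingC.
    apply/idP/idP => [/andP [/andP [/andP [-> _] d20] /eqP <-]|/andP [vS /eqP dk]].
      by rewrite inordK ?ltnS // eqxx.
    rewrite vS dk kle /=; apply/andP; split.
      rewrite andbT; apply/eqP => vu; move: k0; rewrite -dk vu.
      by have /eqP -> : (hamming u u == 0)%N by rewrite hamming_eq0.
    by apply/eqP; apply: val_inj; rewrite /= inordK // ltnS.
  rewrite sumr_const -[X in X <= _]mulr_natl -/(degk S k u).
  have dk := uk k; rewrite k0 /= in dk.
  rewrite mulrA; apply: ler_wpM2r => //.
  apply: le_trans (_ : eps * Num.sqrt n%:R ^+ ceil_half k * a ^+ ceil_half k <= _).
    by apply: ler_wpM2r => //; rewrite exprn_ge0.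
  have sE : Num.sqrt n%:R = s.
    by rewrite -hs sqrtr_sqr ger0_norm // ltW.
  rewrite sE -mulrA -exprMn /a mulrCA divff ?gt_eqF // mulr1 mulrC.
  apply: ler_wpM2r; first exact: ltW.
  by apply: ler_weXn2l => //; apply: ch_le10.
apply: le_trans (_ : \sum_(v in [set w in S | adjG t u w]) a ^+ 11 * V <= _).
  rewrite [X in X <= _]big_mkcond [X in _ <= X]big_mkcond; apply: ler_sum => v _.
  case: ifP => [/andP [/andP [vS vu] d20] | _]; last first.
    by case: ifP => _ //; rewrite mulr_ge0 ?exprn_ge0.
  case: (leqP (hamming u v) (2 * t)) => hd2.
    rewrite inE vS /adjG eq_sym vu hd2 /=.
    apply: le_trans (pb v) _; apply: ler_wpM2r => //; apply: ler_wiXn2l => //.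
    by apply: ch_ge11; rewrite ltnNge.
  rewrite setE inter_empty //.
  by case: ifP => _ //; rewrite mulr_ge0 ?exprn_ge0.
rewrite sumr_const -[X in X <= _]mulr_natl.
rewrite [X in _ <= X](_ : _ = (n ^ 5)%:R * (a ^+ 11 * V)); last by rewrite natrX mulrA.
apply: ler_wpM2r; first by rewrite mulr_ge0 ?exprn_ge0.
rewrite ler_nat.
apply: leq_trans hmax; rewrite /maxdegG.
by apply: (@leq_bigmax_cond _ (fun v => v \in S) (fun v => degG t S v) u).
Qed.

Lemma Vq_gt0 q n t : (0 < Vq q n t)%N.
Proof. by rewrite /Vq big_ord_recl bin0 expn0. Qed.

Unset Implicit Arguments.

Theorem lemma4p3 (R : realType) (q : nat) (hq : (2 <= q)%N) :
  exists C : R, 0 < C /\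
  forall eps : R, 0 < eps -> eps < C^-1 ->
  exists n0 : nat, forall (n t : nat), (n0 <= n)%N -> (0 < t)%N ->
    (t%:R <= 10 * Num.sqrt (n%:R : R)) ->
    forall S : {set word q n}, (maxdegG t S <= n ^ 5)%N ->
    (#|S1 eps S|%:R : R) <= (1 + C * eps) * Hq R q n t.
Proof.
pose b : R := (20 * q ^ 2)%:R.
have b20 : 20 <= b by rewrite /b ler_nat; nia.
have b1 : 1 <= b by apply: le_trans b20; rewrite ler1n.
have b0 : 0 <= b by apply: le_trans b1.
pose C0 : R := 21%:R * b ^+ 10 + 1.
have C00 : 1 <= C0.
  by rewrite /C0 lerDr mulr_ge0 ?exprn_ge0.
exists (2 * C0); split; first by rewrite mulr_gt0 // (lt_le_trans ltr01 C00).
move=> eps he0 heC.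
have heC' : 2 * C0 * eps < 1.
  have C0p : 0 < 2 * C0 by rewrite mulr_gt0 // (lt_le_trans ltr01 C00).
  by rewrite -(ltr_pM2l C0p) mulfV ?gt_eqF in heC.
have e1 : eps < 1 by nra.
pose M := b ^+ 11 / eps.
have M0 : 0 <= M by apply: divr_ge0; [exact: exprn_ge0 | exact: ltW].
have hm := archi_boundP M0.
set m := Num.Def.archi_bound M in hm.
have Mb : b <= M.
  rewrite /M ler_pdivlMr //.
  have h : b <= b ^+ 11 by rewrite -{1}(expr1 b); apply: ler_weXn2l.
  nra.
exists (m ^ 2)%N.
move=> n t hn ht0 htn S hmax.
set s := Num.sqrt (n%:R : R) in htn *.
have hs : s ^+ 2 = n%:R by rewrite sqr_sqrtr // ler0n.
have sm : m%:R <= s.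
  by rewrite -(ger0_norm (ler0n R m)) -sqrtr_sqr ler_sqrt // -natrX ler_nat.
have sb : b <= s by apply: le_trans Mb _; apply: le_trans sm; exact: ltW.
have hs0 : 0 < s by apply: lt_le_trans sb; apply: lt_le_trans b20.
have h2t : (2 * t <= n)%N.
  rewrite -(ler_nat R) natrM -hs; nra.
have hn0 : (0 < n)%N by apply: leq_trans h2t; rewrite muln_gt0 ht0.
have a1 : b / s <= 1 by rewrite ler_pdivrMr // mul1r.
have hub := @u_bound R q n t s b eps S hq hs hs0 erefl htn h2t hn0 he0 hmax a1.
set V := (Vq q n t)%:R in hub.
have V0 : 0 < V by rewrite ltr0n Vq_gt0.
set A := S1 eps S in hub *.
set delta := 21%:R * b ^+ 10 * eps + n%:R ^+ 5 * (b / s) ^+ 11 in hub.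
have dc := double_count A (ball t).
rewrite (eq_bigr (fun _ => Vq q n t)) in dc; last by move=> u _; rewrite card_ball.
rewrite sum_nat_const card_ffun !card_ord in dc.
have dcR : (#|A|)%:R * V <= (q ^ n)%:R + (#|A|)%:R * (delta * V).
  move: dc; rewrite -(ler_nat R) natrD natrM natr_sum => dc.
  apply: le_trans dc _; rewrite lerD2l.
  apply: le_trans (_ : \sum_(u in A) delta * V <= _).
    apply: ler_sum => u uA; rewrite natr_sum; exact: hub.
  by rewrite sumr_const mulr_natl.
have hd0 : 0 <= delta.
  apply: addr_ge0; [apply: mulr_ge0; [apply: mulr_ge0 => //; exact: exprn_ge0 | exact: ltW] |
    apply: mulr_ge0; [exact: exprn_ge0 | apply: exprn_ge0; apply: divr_ge0 => //; exact: ltW]].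
have hdC : delta <= C0 * eps.
  rewrite /delta /C0 (mulrDl (21%:R * b ^+ 10) 1 eps) mul1r lerD2l.
  have -> : n%:R ^+ 5 * (b / s) ^+ 11 = b ^+ 11 / s.
    by rewrite -hs -exprM expr_div_n; field; rewrite gt_eqF.
  rewrite ler_pdivrMr // mulrC -ler_pdivrMr //.
  by apply: le_trans sm; exact: ltW.
rewrite /Hq mulrA ler_pdivlMr //.
set X := (#|A|)%:R * V in dcR *.
set N := (q ^ n)%:R in dcR *.
have X0 : 0 <= X by rewrite mulr_ge0 // ltW.
have N0 : 0 <= N by [].
have dcR' : X <= N + delta * X by rewrite /X mulrCA mulrA (mulrC _ delta) -mulrA; move: dcR; rewrite mulrA (mulrC _ delta) -mulrA.
have dlt : delta <= C0 * eps by [].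
have h1 : X * (1 - delta) <= N.
  rewrite mulrBr mulr1 mulrC; lra.
have p : 0 <= X * delta * (1 - 2 * delta).
  apply: mulr_ge0; first exact: mulr_ge0.
  rewrite subr_ge0; lra.
have h2 : X <= X * (1 - delta) * (1 + 2 * delta).
  have -> : X * (1 - delta) * (1 + 2 * delta) = X + X * delta * (1 - 2 * delta) by ring.
  lra.
apply: le_trans h2 _.
apply: le_trans (_ : N * (1 + 2 * delta) <= _).
  apply: ler_wpM2r => //; lra.
rewrite mulrC; apply: ler_wpM2r => //; lra.
Qed.
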